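(* For any two countable linear orders $A$ and $B$, $\mathsf{rk}(A+B)\le\max(\mathsf{rk}(A),\mathsf{rk}(B))+1$.
   Context: $A+B$ is the linear order on the disjoint union of $A$ and $B$, with the original orders on $A$ and on $B$ and $a<b$ for all $a\in A$, $b\in B$. Let $\mathcal F$ be the class of finite linear orders (language $\{<\}$); countable linear orders are the structures considered; substructures are suborders and $\mathsf{age}(X)$ is the set of finite suborders of $X$. For $A'\le B'$, $B'$ is a prime extension of $A'$ if $|B'\setminus A'|=1$; a realization of $B'$ in $X$ (where $A'\le X$) is $C\le X$ with $A'\le C$ and an order-isomorphism $B'\to C$ fixing $A'$ pointwise. For $F\in\mathsf{age}(X)$ define by recursion: $\mathsf{rk}_X(F)\ge0$ always; $\mathsf{rk}_X(F)\ge\alpha+1$ iff every prime extension $B'\in\mathcal F$ of $F$ has a realization $C$ in $X$ with $\mathsf{rk}_X(C)\ge\alpha$; for limit $\alpha$, $\mathsf{rk}_X(F)\ge\alpha$ iff $\mathsf{rk}_X(F)\ge\beta$ for all $\beta<\alpha$. $\mathsf{rk}_X(F)=\sup\{\alpha:\mathsf{rk}_X(F)\ge\alpha\}$ (or $\infty$, with $\infty+1=\infty$), and $\mathsf{rk}(X)=\mathsf{rk}_X(\emptyset)$. *)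

(* Defs.v *)
From Stdlib Require Import List.

Record LinOrd := {
  car :> Type;
  lt : car -> car -> Prop;
  lt_irrefl : forall x, ~ lt x x;
  lt_trans : forall x y z, lt x y -> lt y z -> lt x z;
  lt_total : forall x y, x <> y -> lt x y \/ lt y x
}.
Arguments lt {_} _ _.

Definition countable (X : LinOrd) : Prop :=
  exists f : car X -> nat, forall x y, f x = f y -> x = y.

Definition sum_lt (A B : LinOrd) (u v : car A + car B) : Prop :=
  match u, v with
  | inl a, inl a' => lt a a'
  | inr b, inr b' => lt b b'
  | inl _, inr _ => True
  | inr _, inl _ => False
  end.

Lemma sum_lt_irrefl A B : forall x, ~ sum_lt A B x x.
Proof. intros [a|b]; simpl; apply lt_irrefl. Qed.

Lemma sum_lt_trans A B : forall x y z,
  sum_lt A B x y -> sum_lt A B y z -> sum_lt A B x z.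
Proof.
  intros [a|b] [a'|b'] [a''|b'']; simpl; try tauto; apply lt_trans.
Qed.

Lemma sum_lt_total A B : forall x y, x <> y -> sum_lt A B x y \/ sum_lt A B y x.
Proof.
  intros [a|b] [a'|b'] H; simpl; auto.
  - apply lt_total; intro E; apply H; now subst.
  - apply lt_total; intro E; apply H; now subst.
Qed.

Definition lo_sum (A B : LinOrd) : LinOrd :=
  {| car := car A + car B; lt := sum_lt A B;
     lt_irrefl := sum_lt_irrefl A B; lt_trans := sum_lt_trans A B;
     lt_total := sum_lt_total A B |}.

(** Countable ordinals as Brouwer trees: zero, successor, sup of a sequence. *)
Inductive ord : Type :=
| OZ : ord
| OS : ord -> ord
| OL : (nat -> ord) -> ord.

(** max(a,b) = sup of the sequence a, b, b, ... *)
Definition omax (a b : ord) : ord :=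
  OL (fun n => match n with 0 => a | _ => b end).

(** Subsets (substructures) of X are predicates on its carrier. *)
Definition finite_sub {X : LinOrd} (F : car X -> Prop) : Prop :=
  exists l : list (car X), forall x, F x <-> In x l.

(** A prime extension B' of the finite suborder F: the set F plus one new
    point (None), with a strict linear order R whose restriction to F is the
    order of X. *)
Definition prime_ext {X : LinOrd} (F : car X -> Prop)
  (R : option {x : car X | F x} -> option {x : car X | F x} -> Prop) : Prop :=
  (forall u, ~ R u u) /\
  (forall u v w, R u v -> R v w -> R u w) /\
  (forall u v, u <> v -> R u v \/ R v u) /\
  (forall a b : {x : car X | F x}, R (Some a) (Some b) <-> lt (proj1_sig a) (proj1_sig b)).

(** A realization of the prime extension (F, R) in X: a suborder C of X
    containing F and an order isomorphism g from B' onto C fixing F pointwise. *)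
Definition realization {X : LinOrd} (F : car X -> Prop)
  (R : option {x : car X | F x} -> option {x : car X | F x} -> Prop)
  (C : car X -> Prop) (g : option {x : car X | F x} -> car X) : Prop :=
  (forall x, F x -> C x) /\
  (forall a : {x : car X | F x}, g (Some a) = proj1_sig a) /\
  (forall u v, R u v <-> lt (g u) (g v)) /\
  (forall u v, g u = g v -> u = v) /\
  (forall y, C y <-> exists u, g u = y).

Fixpoint rk_ge (X : LinOrd) (o : ord) {struct o} : (car X -> Prop) -> Prop :=
  match o with
  | OZ => fun _ => True
  | OS o' => fun F =>
      forall R, prime_ext F R ->
        exists C g, realization F R C g /\ rk_ge X o' C
  | OL f => fun F => forall n, rk_ge X (f n) F
  end.

Definition rk_ge_struct (X : LinOrd) (o : ord) : Prop :=
  rk_ge X o (fun _ => False).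

Definition rk_le (X : LinOrd) (o : ord) : Prop :=
  ~ rk_ge_struct X (OS o).

(* Main.v *)
Require Import Defs.
From Stdlib Require Import List ProofIrrelevance Classical.

Lemma sig_eq {T : Type} {P : T -> Prop} (a b : {x : T | P x}) :
  proj1_sig a = proj1_sig b -> a = b.
Proof. destruct a as [x hx], b as [y hy]; simpl; intros ->; f_equal; apply proof_irrelevance. Qed.

Definition dual (X : LinOrd) : LinOrd.
Proof.
  refine {| car := car X; lt := fun x y => lt y x |}.
  - intros x; apply lt_irrefl.
  - intros x y z h1 h2; exact (lt_trans X _ _ _ h2 h1).
  - intros x y h; destruct (lt_total X x y h); auto.
Defined.

Lemma dual_rk (X : LinOrd) o : forall F : car X -> Prop,
  (rk_ge (dual X) o F <-> rk_ge X o F).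
Proof.
  induction o as [|o IH|f IH]; intros F.
  - simpl; tauto.
  - split.
    + intros Hd R HR.
      destruct (Hd (fun u v => R v u)) as (C & g & Hr & Hk).
      { destruct HR as (h1&h2&h3&h4). split; [|split; [|split]].
        - intros u; apply h1.
        - intros u v w a b; exact (h2 _ _ _ b a).
        - intros u v n; destruct (h3 u v n); auto.
        - intros a b; apply h4. }
      exists C, g; split; [|apply IH; exact Hk].
      destruct Hr as (r1&r2&r3&r4&r5); split; [|split; [|split; [|split]]]; auto.

    + intros Hd R HR.
      destruct (Hd (fun u v => R v u)) as (C & g & Hr & Hk).
      { destruct HR as (h1&h2&h3&h4). split; [|split; [|split]].
        - intros u; apply h1.
        - intros u v w a b; exact (h2 _ _ _ b a).
        - intros u v n; destruct (h3 u v n); auto.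
        - intros a b; apply h4. }
      exists C, g; split; [|apply IH; exact Hk].
      destruct Hr as (r1&r2&r3&r4&r5); split; [|split; [|split; [|split]]]; auto.

  - split; intros H n; apply IH; apply H.
Qed.

Lemma single_rk (X : LinOrd) o (x : car X) :
  rk_ge X o (fun y => y = x) -> rk_ge_struct X (OS o).
Proof.
  intros Hk R HR. destruct HR as (p1&p2&p3&p4).
  exists (fun y => y = x), (fun _ => x). split; auto.
  split; [|split; [|split; [|split]]].
  - intros y [].
  - intros [? []].
  - intros [[? []]|] [[? []]|]. split; intro h; [destruct (p1 _ h)|destruct (lt_irrefl _ _ h)].
  - intros [[? []]|] [[? []]|]; reflexivity.
  - intros y; split; [intros ->; exists None; auto | intros [_ <-]; auto].
Qed.

Lemma below_lemma (X Y : LinOrd) (e : car Y -> car X) (t : car X)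
  (he : forall y y', lt (e y) (e y') <-> lt y y')
  (hon : forall x, lt x t -> exists y, e y = x) :
  forall o F G, F t -> (forall y, G y <-> F (e y) /\ lt (e y) t) ->
    rk_ge X o F -> rk_ge Y o G.
Proof.
  assert (e_inj : forall y y', e y = e y' -> y = y').
  { intros y y' E. destruct (classic (y = y')) as [|n]; auto.
    destruct (lt_total Y y y' n) as [h|h]; apply he in h; rewrite E in h;
      destruct (lt_irrefl _ _ h). }
  induction o as [|o IH|f IH]; intros F G Ft HG HF.
  - exact I.
  - intros R' HR'. destruct HR' as (p1&p2&p3&p4).
    set (R := fun u v : option {x : car X | F x} => match u, v with
      | Some a, Some b => lt (proj1_sig a) (proj1_sig b)
      | None, None => False
      | None, Some b => lt (proj1_sig b) t -> exists y (h : G y), e y = proj1_sig b /\ R' None (Some (exist _ y h))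
      | Some a, None => lt (proj1_sig a) t /\ exists y (h : G y), e y = proj1_sig a /\ R' (Some (exist _ y h)) None
      end).
    assert (preN : forall b y (h : G y), e y = proj1_sig b ->
       (R None (Some b) <-> R' None (Some (exist _ y h)))).
    { intros b y h E; simpl; split.
      - intros H. destruct (H ltac:(rewrite <- E; apply (proj1 (HG y) h))) as (y' & h' & E' & HH).
        rewrite <- E in E'. apply e_inj in E'. subst y'. rewrite (proof_irrelevance _ h h'); exact HH.
      - intros HH _; exists y, h; auto. }
    assert (preS : forall b y (h : G y), e y = proj1_sig b ->
       (R (Some b) None <-> R' (Some (exist _ y h)) None)).
    { intros b y h E; simpl; split.
      - intros [_ (y' & h' & E' & HH)].
        rewrite <- E in E'. apply e_inj in E'. subst y'. rewrite (proof_irrelevance _ h h'); exact HH.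
      - intros HH; split; [rewrite <- E; apply (proj1 (HG y) h)|exists y, h; auto]. }
    assert (getpre : forall b : {x | F x}, lt (proj1_sig b) t -> exists y (h : G y), e y = proj1_sig b).
    { intros b hb. destruct (hon _ hb) as [y Ey]. exists y.
      assert (h : G y) by (apply HG; rewrite Ey; split; [apply (proj2_sig b)|exact hb]).
      exists h; exact Ey. }
    assert (HR : prime_ext F R).
    { split; [|split; [|split]].
      - intros [a|]; simpl; [apply lt_irrefl|tauto].
      - intros [a|] [b|] [c|]; try (simpl; tauto).
        + simpl; apply lt_trans.
        + intros Hab Hb. pose proof Hb as Hb0; destruct Hb0 as [hbt _].
          assert (hat : lt (proj1_sig a) t) by (eapply lt_trans; eauto).
          destruct (getpre a hat) as (ya & ha & Ea).
          destruct (getpre b hbt) as (yb & hb & Eb).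
          apply (preS _ _ ha Ea). apply (preS _ _ hb Eb) in Hb.
          eapply p2; [|exact Hb]. apply p4; simpl. apply he; rewrite Ea, Eb; exact Hab.
        + intros Ha Hc. pose proof Ha as Ha0; destruct Ha0 as [hat _].
          destruct (getpre a hat) as (ya & ha & Ea).
          apply (preS _ _ ha Ea) in Ha.
          destruct (classic (lt (proj1_sig c) t)) as [hct|hct].
          * destruct (getpre c hct) as (yc & hc & Ec).
            apply (preN _ _ hc Ec) in Hc.
            simpl. rewrite <- Ea, <- Ec. apply he. apply (p4 (exist _ ya ha) (exist _ yc hc)).
            eapply p2; eauto.
          * simpl. destruct (classic (proj1_sig c = t)) as [E|n].
            -- rewrite E; exact hat.
            -- destruct (lt_total X _ _ n) as [h|h]; [contradiction|].
               eapply lt_trans; eauto.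
        + intros Hb Hbc hct.
          assert (hbt : lt (proj1_sig b) t) by (eapply lt_trans; eauto).
          destruct (getpre b hbt) as (yb & hb & Eb).
          destruct (getpre c hct) as (yc & hc & Ec).
          apply (preN _ _ hb Eb) in Hb. exists yc, hc; split; [exact Ec|].
          eapply p2; [exact Hb|]. apply p4; simpl. apply he; rewrite Eb, Ec; exact Hbc.
        + intros Hb Hb'. pose proof Hb' as Hb0; destruct Hb0 as [hbt _].
          destruct (getpre b hbt) as (yb & hb & Eb).
          apply (preS _ _ hb Eb) in Hb'. apply (preN _ _ hb Eb) in Hb.
          apply (p1 None). eapply p2; eauto.
      - intros [a|] [b|] n.
        + simpl. apply lt_total. intro E; apply n; f_equal; apply sig_eq; exact E.
        + destruct (classic (lt (proj1_sig a) t)) as [hat|hat].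
          * destruct (getpre a hat) as (ya & ha & Ea).
            destruct (p3 (Some (exist _ ya ha)) None ltac:(discriminate)) as [h|h].
            -- left; apply (preS _ _ ha Ea); exact h.
            -- right; apply (preN _ _ ha Ea); exact h.
          * right; simpl; intro; contradiction.
        + destruct (classic (lt (proj1_sig b) t)) as [hbt|hbt].
          * destruct (getpre b hbt) as (yb & hb & Eb).
            destruct (p3 (Some (exist _ yb hb)) None ltac:(discriminate)) as [h|h].
            -- right; apply (preS _ _ hb Eb); exact h.
            -- left; apply (preN _ _ hb Eb); exact h.
          * left; simpl; intro; contradiction.
        + contradiction.
      - intros a b; simpl; tauto. }
    destruct (HF R HR) as (C & g & (r1&r2&r3&r4&r5) & HC).
    set (tt := exist F t Ft).
    assert (gN : lt (g None) t).
    { assert (E := r2 tt); simpl in E; rewrite <- E. apply r3. simpl. intro h; destruct (lt_irrefl _ _ h). }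
    destruct (hon _ gN) as [y0 Hy0].
    exists (fun y => G y \/ y = y0), (fun u => match u with None => y0 | Some a => proj1_sig a end).
    split.
    + split; [|split; [|split; [|split]]].
      * intros y h; left; exact h.
      * intros a; reflexivity.
      * intros [[y h]|] [[y' h']|]; simpl.
        -- apply (p4 (exist _ y h) (exist _ y' h')).
        -- set (b := exist F (e y) (proj1 (proj1 (HG y) h))).
           rewrite <- he, Hy0. replace (e y) with (g (Some b)) by (rewrite r2; reflexivity).
           rewrite <- r3. symmetry. apply preS. reflexivity.
        -- set (b := exist F (e y') (proj1 (proj1 (HG y') h'))).
           rewrite <- he, Hy0. replace (e y') with (g (Some b)) by (rewrite r2; reflexivity).
           rewrite <- r3. symmetry. apply preN. reflexivity.
        -- split; intro h; [destruct (p1 _ h)|destruct (lt_irrefl _ _ h)].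
      * intros [[y h]|] [[y' h']|]; simpl; intro E.
        -- subst y'. rewrite (proof_irrelevance _ h h'); reflexivity.
        -- exfalso. set (b := exist F (e y) (proj1 (proj1 (HG y) h))).
           assert (g (Some b) = g None) by (rewrite r2; simpl; rewrite <- Hy0, E; reflexivity).
           apply r4 in H; discriminate.
        -- exfalso. set (b := exist F (e y') (proj1 (proj1 (HG y') h'))).
           assert (g (Some b) = g None) by (rewrite r2; simpl; rewrite <- Hy0, E; reflexivity).
           apply r4 in H; discriminate.
        -- reflexivity.
      * intros y; split.
        -- intros [h| ->]; [exists (Some (exist _ y h)); reflexivity | exists None; reflexivity].
        -- intros [[[y' h]|] E]; simpl in E; subst; auto.
    + apply (IH C); [apply r1; exact Ft| |exact HC].
      intros y; split.
      * intros [h| ->].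
        -- destruct (proj1 (HG y) h) as [hF hl]; split; [apply r1; exact hF|exact hl].
        -- rewrite Hy0; split; [apply r5; exists None; reflexivity|exact gN].
      * intros [hC hl]. apply r5 in hC. destruct hC as [[b|] E].
        -- left. apply HG. rewrite r2 in E. rewrite <- E. split; [apply (proj2_sig b)|rewrite E; exact hl].
        -- right. apply e_inj. rewrite Hy0; symmetry; exact E.
  - intros n. apply (IH n F G Ft HG (HF n)).
Qed.

Theorem proposition6p7 (A B : LinOrd) (cA : countable A) (cB : countable B)
  (a b : ord) (ha : rk_le A a) (hb : rk_le B b) :
  rk_le (lo_sum A B) (OS (omax a b)).
Proof.
  intro H.
  destruct (H (fun _ _ => False)) as (C1 & g1 & (r1&r2&r3&r4&r5) & H1).
  { split; [|split; [|split]].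
    - intros u h; exact h.
    - intros u v w h; destruct h.
    - intros [[? []]|] [[? []]|] n; exfalso; apply n; reflexivity.
    - intros [? []]. }
  assert (C1c : forall v, C1 v <-> v = g1 None).
  { intros v; rewrite r5; split.
    - intros [[[? []]|] E]; auto.
    - intros ->; exists None; reflexivity. }
  destruct (g1 None) as [x0|y0] eqn:Ez.
  - set (R2 := fun u v : option {x : car (lo_sum A B) | C1 x} => match u, v with
      | None, Some _ => True
      | Some a, Some b => lt (proj1_sig a) (proj1_sig b)
      | _, _ => False end).
    destruct (H1 R2) as (C2 & g2 & (s1&s2&s3&s4&s5) & H2).
    { split; [|split; [|split]].
      - intros [u|]; [apply (lt_irrefl (lo_sum A B))|simpl; tauto].
      - intros [u|] [v|] [w|]; try (simpl; tauto). apply (lt_trans (lo_sum A B)).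
      - intros [u|] [v|] n; try (simpl; auto; fail).
        all: try (exfalso; apply n; reflexivity).
        apply (lt_total (lo_sum A B)). intro E; apply n; f_equal; apply sig_eq; exact E.
      - intros u v; simpl; tauto. }
    set (zz := exist C1 (inl x0) (proj2 (C1c _) eq_refl)).
    assert (hw : lt (g2 None) (inl x0)).
    { assert (E := s2 zz); simpl in E; rewrite <- E. apply s3. exact I. }
    destruct (g2 None) as [x1|y1] eqn:Ew; [|destruct hw].
    assert (C2c : forall v, C2 v <-> v = inl x1 \/ v = inl x0).
    { intros v; rewrite s5; split.
      - intros [[c|] E].
        + right. rewrite s2 in E. rewrite <- E. apply C1c. apply (proj2_sig c).
        + left; rewrite <- E; exact Ew.
      - intros [->| ->]; [exists None; exact Ew|exists (Some zz); apply s2]. }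
    apply ha. apply (single_rk A a x1).
    apply (below_lemma (lo_sum A B) A inl (inl x0)) with (F := C2).
    + intros y y'; simpl; tauto.
    + intros [x|x] hx; [exists x; reflexivity|destruct hx].
    + apply C2c; right; reflexivity.
    + intros y; rewrite C2c; split.
      * intros ->; split; [left; reflexivity|exact hw].
      * intros [[E|E] hl]; [injection E; auto|].
        injection E as ->. destruct (lt_irrefl _ _ hl).
    + exact (H2 0).
  - set (R2 := fun u v : option {x : car (lo_sum A B) | C1 x} => match u, v with
      | Some _, None => True
      | Some a, Some b => lt (proj1_sig a) (proj1_sig b)
      | _, _ => False end).
    destruct (H1 R2) as (C2 & g2 & (s1&s2&s3&s4&s5) & H2).
    { split; [|split; [|split]].
      - intros [u|]; [apply (lt_irrefl (lo_sum A B))|simpl; tauto].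
      - intros [u|] [v|] [w|]; try (simpl; tauto). apply (lt_trans (lo_sum A B)).
      - intros [u|] [v|] n; try (simpl; auto; fail).
        all: try (exfalso; apply n; reflexivity).
        apply (lt_total (lo_sum A B)). intro E; apply n; f_equal; apply sig_eq; exact E.
      - intros u v; simpl; tauto. }
    set (zz := exist C1 (inr y0) (proj2 (C1c _) eq_refl)).
    assert (hw : @lt (lo_sum A B) (inr y0) (g2 None)).
    { assert (E := s2 zz); simpl in E; rewrite <- E. apply s3. exact I. }
    destruct (g2 None) as [x1|y1] eqn:Ew; [destruct hw|].
    assert (C2c : forall v, C2 v <-> v = inr y1 \/ v = inr y0).
    { intros v; rewrite s5; split.
      - intros [[c|] E].
        + right. rewrite s2 in E. rewrite <- E. apply C1c. apply (proj2_sig c).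
        + left; rewrite <- E; exact Ew.
      - intros [->| ->]; [exists None; exact Ew|exists (Some zz); apply s2]. }
    apply hb. apply (single_rk B b y1).
    apply (proj1 (dual_rk B b _)).
    apply (below_lemma (dual (lo_sum A B)) (dual B) (fun y : car B => (@inr (car A) (car B) y : car (lo_sum A B))) (@inr (car A) (car B) y0 : car (lo_sum A B))) with (F := C2).
    + intros y y'; simpl; tauto.
    + intros [x|x] hx; [destruct hx|exists x; reflexivity].
    + apply C2c; right; reflexivity.
    + intros y; rewrite C2c; split.
      * intros ->; split; [left; reflexivity|exact hw].
      * intros [[E|E] hl]; [injection E; auto|].
        injection E as ->. destruct (lt_irrefl _ _ hl).
    + apply (proj2 (dual_rk (lo_sum A B) b C2)). exact (H2 1).
Qed.
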